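(* For all $t>0$ and $z\in\mathbb{C}$, $$|R(t,z)|\le 2\Lambda\Big(-\frac{\sqrt t}{\sqrt2}\Big)e^{|\mathrm{Re}(z)|}.$$
   Context: $\Lambda(z):=e^{z^2}(1-\mathrm{erf}(z))$ for $z\in\mathbb{C}$; $R(t,z):=e^z\Lambda\big(\frac{z}{2\sqrt{it}}-\sqrt{it}\big)-e^{-z}\Lambda\big(\frac{z}{2\sqrt{it}}+\sqrt{it}\big)$ for $t>0$, $z\in\mathbb{C}$, with principal square roots ($\sqrt{i}=e^{i\pi/4}$). *)

(* Defs.v *)
From Stdlib Require Import Reals.
From Coquelicot Require Import Coquelicot.
Open Scope R_scope.

Definition Cexp (z : C) : C :=
  (exp (Re z) * cos (Im z), exp (Re z) * sin (Im z)).

(* principal square root (branch cut on the negative real axis,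
   Re (Csqrt z) >= 0, and Im (Csqrt z) >= 0 when Re (Csqrt z) = 0) *)
Definition Csqrt (z : C) : C :=
  (sqrt ((Cmod z + Re z) / 2),
   (if Rle_dec 0 (Im z) then 1 else -1) * sqrt ((Cmod z - Re z) / 2)).

(* error function, erf z = 2/sqrt(pi) * int_0^z e^{-w^2} dw,
   integrated along the segment w = s z, s in [0,1] *)
Definition Cerf (z : C) : C :=
  Cmult (RtoC (2 / sqrt PI))
    (RInt (V := C_R_CompleteNormedModule)
       (fun s : R => Cmult z (Cexp (Copp (Cmult (Cmult (RtoC s) z) (Cmult (RtoC s) z)))))
       0 1).

Definition Lambda (z : C) : C :=
  Cmult (Cexp (Cmult z z)) (Cminus (RtoC 1) (Cerf z)).

Definition Rfun (t : R) (z : C) : C :=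
  let s := Csqrt (Cmult Ci (RtoC t)) in
  Cminus (Cmult (Cexp z) (Lambda (Cminus (Cdiv z (Cmult (RtoC 2) s)) s)))
         (Cmult (Cexp (Copp z)) (Lambda (Cplus (Cdiv z (Cmult (RtoC 2) s)) s))).

(* Main.v *)
Require Import Defs.
From Stdlib Require Import Reals Lra.
From Coquelicot Require Import Coquelicot.
Open Scope R_scope.

Ltac c2d :=
  match goal with
  | |- continuity_2d_pt (fun u v => @?f u v + @?g u v) _ _ => apply (continuity_2d_pt_plus f g); c2d
  | |- continuity_2d_pt (fun u v => @?f u v - @?g u v) _ _ => apply (continuity_2d_pt_minus f g); c2d
  | |- continuity_2d_pt (fun u v => @?f u v * @?g u v) _ _ => apply (continuity_2d_pt_mult f g); c2d
  | |- continuity_2d_pt (fun u v => - @?f u v) _ _ => apply (continuity_2d_pt_opp f); c2d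
  | |- continuity_2d_pt (fun u v => u) _ _ => apply continuity_2d_pt_id1
  | |- continuity_2d_pt (fun u v => v) _ _ => apply continuity_2d_pt_id2
  | |- continuity_2d_pt (fun u v => exp (@?f u v)) _ _ =>
      apply (continuity_1d_2d_pt_comp exp f); [apply derivable_continuous_pt, derivable_pt_exp| c2d]
  | |- continuity_2d_pt (fun u v => cos (@?f u v)) _ _ =>
      apply (continuity_1d_2d_pt_comp cos f); [apply derivable_continuous_pt, derivable_pt_cos| c2d]
  | |- continuity_2d_pt (fun u v => sin (@?f u v)) _ _ =>
      apply (continuity_1d_2d_pt_comp sin f); [apply derivable_continuous_pt, derivable_pt_sin| c2d]
  | |- continuity_2d_pt (fun u v => _) _ _ => apply continuity_2d_pt_const
  end.


Definition Eint (w : C) : C :=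
  RInt (V := C_R_CompleteNormedModule)
    (fun s : R => Cmult w (Cexp (Copp (Cmult (Cmult (RtoC s) w) (Cmult (RtoC s) w))))) 0 1.

Ltac unf := unfold Cexp, Cmult, Copp, Cminus, Cplus, RtoC, Re, Im; simpl.

Section S.
Variables c1 c2 a1 a2 : R.
Definition wl (l : R) : C := (c1 + l * a1, c2 + l * a2).
Definition phi (l s : R) : C :=
  Cmult (wl l) (Cexp (Copp (Cmult (Cmult (RtoC s) (wl l)) (Cmult (RtoC s) (wl l))))).
Definition psi (l s : R) : C :=
  let u := Cmult (RtoC s) (wl l) in
  Cmult (a1,a2) (Cmult (Cexp (Copp (Cmult u u))) (Cminus (RtoC 1) (Cmult (RtoC 2) (Cmult u u)))).
Definition Hf (l s : R) : C :=
  let u := Cmult (RtoC s) (wl l) in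
  Cmult (RtoC s) (Cmult (a1,a2) (Cexp (Copp (Cmult u u)))).

Ltac unfa := unfold phi, psi, Hf, wl; unf.

Lemma d1f l s : is_derive (fun l => fst (phi l s)) l (fst (psi l s)).
Proof. unfa. auto_derive. trivial. unfold Rminus. ring. Qed.
Lemma d1s l s : is_derive (fun l => snd (phi l s)) l (snd (psi l s)).
Proof. unfa. auto_derive. trivial. unfold Rminus. ring. Qed.
Lemma d2f l s : is_derive (fun s => fst (Hf l s)) s (fst (psi l s)).
Proof. unfa. auto_derive. trivial. unfold Rminus. ring. Qed.
Lemma d2s l s : is_derive (fun s => snd (Hf l s)) s (snd (psi l s)).
Proof. unfa. auto_derive. trivial. unfold Rminus. ring. Qed.

Definition G1 l := RInt (fun s => fst (phi l s)) 0 1.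
Definition G2 l := RInt (fun s => snd (phi l s)) 0 1.
Definition D1 l := fst (Hf l 1) - fst (Hf l 0).
Definition D2 l := snd (Hf l 1) - snd (Hf l 0).

Lemma inner1 l : is_RInt (fun s => fst (psi l s)) 0 1 (D1 l).
Proof.
  apply (is_RInt_derive (fun s => fst (Hf l s))).
  - intros; apply d2f.
  - intros. apply (@ex_derive_continuous R_AbsRing R_NormedModule). unfa. auto_derive. trivial.
Qed.
Lemma inner2 l : is_RInt (fun s => snd (psi l s)) 0 1 (D2 l).
Proof.
  apply (is_RInt_derive (fun s => snd (Hf l s))).
  - intros; apply d2s.
  - intros. apply (@ex_derive_continuous R_AbsRing R_NormedModule). unfa. auto_derive. trivial.
Qed.

Lemma dG1 l : is_derive G1 l (D1 l).
Proof.
  unfold G1.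
  replace (D1 l) with (RInt (fun t => Derive (fun u => fst (phi u t)) l) 0 1).
  - apply (is_derive_RInt_param (fun l s => fst (phi l s))).
    + apply filter_forall. intros x t _. eexists. apply d1f.
    + intros t _. apply continuity_2d_pt_ext with (fun u v => fst (psi u v)).
      * intros x y. symmetry. apply is_derive_unique, d1f.
      * unfa. c2d.
    + apply filter_forall. intros y. apply (@ex_RInt_continuous R_CompleteNormedModule). intros z _.
      apply (@ex_derive_continuous R_AbsRing R_NormedModule). unfa. auto_derive. trivial.
  - apply is_RInt_unique. eapply is_RInt_ext. 2: apply inner1.
    intros x _. symmetry. apply is_derive_unique, d1f.
Qed.
Lemma dG2 l : is_derive G2 l (D2 l).
Proof.
  unfold G2.
  replace (D2 l) with (RInt (fun t => Derive (fun u => snd (phi u t)) l) 0 1).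
  - apply (is_derive_RInt_param (fun l s => snd (phi l s))).
    + apply filter_forall. intros x t _. eexists. apply d1s.
    + intros t _. apply continuity_2d_pt_ext with (fun u v => snd (psi u v)).
      * intros x y. symmetry. apply is_derive_unique, d1s.
      * unfa. c2d.
    + apply filter_forall. intros y. apply (@ex_RInt_continuous R_CompleteNormedModule). intros z _.
      apply (@ex_derive_continuous R_AbsRing R_NormedModule). unfa. auto_derive. trivial.
  - apply is_RInt_unique. eapply is_RInt_ext. 2: apply inner2.
    intros x _. symmetry. apply is_derive_unique, d1s.
Qed.

Lemma outer1 : is_RInt D1 (-1) 1 (G1 1 - G1 (-1)).
Proof.
  apply (is_RInt_derive G1 D1).
  - intros; apply dG1.
  - intros. apply (@ex_derive_continuous R_AbsRing R_NormedModule). unfold D1. unfa. auto_derive. trivial.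
Qed.
Lemma outer2 : is_RInt D2 (-1) 1 (G2 1 - G2 (-1)).
Proof.
  apply (is_RInt_derive G2 D2).
  - intros; apply dG2.
  - intros. apply (@ex_derive_continuous R_AbsRing R_NormedModule). unfold D2. unfa. auto_derive. trivial.
Qed.

Lemma Eint_G l : Eint (wl l) = (G1 l, G2 l).
Proof.
  unfold Eint. apply (@is_RInt_unique C_R_CompleteNormedModule).
  apply (is_RInt_fct_extend_pair (U:=R_NormedModule) (V:=R_NormedModule) (fun s => phi l s)).
  - apply (@RInt_correct R_CompleteNormedModule). apply (@ex_RInt_continuous R_CompleteNormedModule). intros z _.
    apply (@ex_derive_continuous R_AbsRing R_NormedModule). unfa. auto_derive. trivial.
  - apply (@RInt_correct R_CompleteNormedModule). apply (@ex_RInt_continuous R_CompleteNormedModule). intros z _.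
    apply (@ex_derive_continuous R_AbsRing R_NormedModule). unfa. auto_derive. trivial.
Qed.

Lemma contour : is_RInt (V := C_R_CompleteNormedModule) (fun l => (D1 l, D2 l)) (-1) 1
   (Cminus (Eint (wl 1)) (Eint (wl (-1)))).
Proof.
  rewrite !Eint_G.
  apply (is_RInt_fct_extend_pair (U:=R_NormedModule) (V:=R_NormedModule) (fun l => (D1 l, D2 l))).
  - exact outer1.
  - exact outer2.
Qed.
End S.
Ltac unfa := unfold phi, psi, Hf, wl; unf.

Lemma exp_le' x y : x <= y -> exp x <= exp y.
Proof. intros H. destruct (Rle_lt_or_eq_dec _ _ H). left; apply exp_increasing; auto. subst; lra. Qed.

Lemma normC (x : C) : norm (K:=R_AbsRing) (V:=C_R_CompleteNormedModule) x = Cmod x.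
Proof. destruct x as [a b]. unfold norm; simpl. unfold prod_norm, Cmod; simpl.
  change (norm a) with (Rabs a). change (norm b) with (Rabs b).
  assert (H: forall y, Rabs y * (Rabs y * 1) = y*(y*1)) by (intros y; rewrite !Rmult_1_r, <- Rabs_mult; apply Rabs_pos_eq; nra).
  rewrite !H. reflexivity. Qed.

Lemma Cexp_plus x y : Cexp (Cplus x y) = Cmult (Cexp x) (Cexp y).
Proof.
  destruct x as [a b]; destruct y as [c d]. unfold Cexp, Cplus, Cmult, Re, Im; simpl.
  rewrite exp_plus, cos_plus, sin_plus. apply injective_projections; simpl; ring.
Qed.

Lemma Cmod_Cexp x : Cmod (Cexp x) = exp (fst x).
Proof.
  destruct x as [a b]. unfold Cmod, Cexp, Re, Im; simpl.
  replace (exp a * cos b * (exp a * cos b * 1) + exp a * sin b * (exp a * sin b * 1))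
    with (exp a * exp a * (Rsqr (sin b) + Rsqr (cos b))) by (unfold Rsqr; ring).
  rewrite sin2_cos2, Rmult_1_r. apply sqrt_square. left; apply exp_pos.
Qed.

Lemma C1mul x : Cmult (RtoC 1) x = x.
Proof. destruct x; unfold Cmult, RtoC; simpl; apply injective_projections; simpl; ring. Qed.
Lemma C0mul x : Cmult (RtoC 0) x = (0,0).
Proof. destruct x; unfold Cmult, RtoC; simpl; apply injective_projections; simpl; ring. Qed.

Lemma sqrt_it t : 0 < t -> Csqrt (Cmult Ci (RtoC t)) = (sqrt (t/2), sqrt (t/2)).
Proof.
  intros ht.
  assert (E : Cmult Ci (RtoC t) = (0, t)) by (unfold Cmult, Ci, RtoC; apply injective_projections; simpl; ring).
  rewrite E. unfold Csqrt, Re, Im; simpl.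
  assert (Hm : Cmod (0, t) = t).
  { unfold Cmod; simpl. replace (0 * (0 * 1) + t * (t * 1)) with (t * t) by ring.
    apply sqrt_square; lra. }
  rewrite Hm. destruct (Rle_dec 0 t); [|lra].
  apply injective_projections; simpl; f_equal; [|ring_simplify]; f_equal; field.
Qed.

Lemma HE w : Cerf w = Cmult (RtoC (2 / sqrt PI)) (Eint w).
Proof. reflexivity. Qed.

Lemma G1_neg x : 0 <= x -> G1 (-x) 0 0 0 0 <= 0.
Proof.
  intros hx. unfold G1.
  apply Rle_trans with (RInt (fun _ => 0) 0 1).
  - apply RInt_le. lra.
    + apply (@ex_RInt_continuous R_CompleteNormedModule). intros z _.
      apply (@ex_derive_continuous R_AbsRing R_NormedModule). unfa. auto_derive. trivial.
    + apply ex_RInt_const.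
    + intros s _. unfa.
      match goal with |- context [cos ?a] => replace a with 0 by ring end.
      match goal with |- context [sin ?a] => replace a with 0 by ring end.
      rewrite cos_0, sin_0.
      match goal with |- context [exp ?a] => pose proof (exp_pos a) end. nra.
  - rewrite RInt_const. unfold scal; simpl. unfold mult; simpl. lra.
Qed.

Lemma rhs t : 0 < t -> exp (t/2) <= Re (Lambda (RtoC (- (sqrt t / sqrt 2)))).
Proof.
  intros ht. set (x := sqrt t / sqrt 2).
  assert (hx : 0 <= x).
  { unfold x. apply Rmult_le_pos. apply sqrt_pos. left; apply Rinv_0_lt_compat, sqrt_lt_R0; lra. }
  assert (hxx : x * x = t / 2).
  { unfold x. assert (0 < sqrt 2) by (apply sqrt_lt_R0; lra).
    replace (sqrt t / sqrt 2 * (sqrt t / sqrt 2)) with ((sqrt t * sqrt t) / (sqrt 2 * sqrt 2)) by (field; lra).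
    rewrite !sqrt_sqrt; lra. }
  unfold Lambda. rewrite HE.
  assert (H1 : RtoC (-x) = wl (-x) 0 0 0 0) by (unfold wl, RtoC; apply injective_projections; simpl; ring).
  assert (H2 : Cmult (RtoC (-x)) (RtoC (-x)) = (x*x, 0)) by (unfold Cmult, RtoC; apply injective_projections; simpl; ring).
  rewrite H2, H1, Eint_G.
  pose proof (G1_neg x hx) as Hg.
  set (g1 := G1 (-x) 0 0 0 0) in *. set (g2 := G2 (-x) 0 0 0 0).
  unfold Cexp, Cmult, Cminus, Cplus, Copp, RtoC, Re, Im; simpl.
  rewrite cos_0, sin_0, hxx.
  assert (0 < 2 / sqrt PI).
  { apply Rdiv_lt_0_compat. lra. apply sqrt_lt_R0. pose proof PI_RGT_0; lra. }
  pose proof (exp_pos (t/2)). assert (2 / sqrt PI * g1 <= 0) by nra. nra.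
Qed.

Lemma alg (A B C2 D k Ep Em : C) : Cmult A B = Cmult C2 D ->
  Cminus (Cmult A (Cmult B (Cminus (RtoC 1) (Cmult k Em))))
         (Cmult C2 (Cmult D (Cminus (RtoC 1) (Cmult k Ep))))
  = Cmult (Cmult A B) (Cmult k (Cminus Ep Em)).
Proof.
  intros H. rewrite !Cmult_assoc, <- H.
  destruct (Cmult A B) as [p1 p2]. destruct k, Ep, Em.
  unfold Cminus, Cmult, Cplus, Copp, RtoC; apply injective_projections; simpl; ring.
Qed.

Theorem mainTheorem13 (t : R) (z : C) (ht : 0 < t) :
  Cmod (Rfun t z) <=
  2 * Re (Lambda (RtoC (- (sqrt t / sqrt 2)))) * exp (Rabs (Re z)).
Proof.
  destruct z as [z1 z2].
  set (q := sqrt (t/2)).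
  assert (hq : 0 < q) by (apply sqrt_lt_R0; lra).
  assert (hqq : q * q = t/2) by (apply sqrt_sqrt; lra).
  set (c1 := (z1 + z2) / (4 * q)). set (c2 := (z2 - z1) / (4 * q)).
  unfold Rfun. cbv zeta. rewrite sqrt_it by lra. fold q.
  assert (Hc : Cdiv (z1, z2) (Cmult (RtoC 2) (q, q)) = (c1, c2)).
  { unfold Cdiv, Cinv, Cmult, RtoC, c1, c2; apply injective_projections; simpl; field; nra. }
  rewrite Hc.
  assert (Hm : Cminus (c1, c2) (q, q) = wl c1 c2 q q (-1))
    by (unfold wl, Cminus, Cplus, Copp; apply injective_projections; simpl; ring).
  assert (Hp : Cplus (c1, c2) (q, q) = wl c1 c2 q q 1)
    by (unfold wl, Cplus; apply injective_projections; simpl; ring).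
  rewrite Hm, Hp. unfold Lambda. rewrite !HE.
  set (wm := wl c1 c2 q q (-1)). set (wp := wl c1 c2 q q 1).
  assert (HP : Cmult (Cexp (z1, z2)) (Cexp (Cmult wm wm)) =
               Cmult (Cexp (Copp (z1, z2))) (Cexp (Cmult wp wp))).
  { rewrite <- !Cexp_plus. f_equal. unfold wm, wp, wl, c1, c2, Cplus, Cmult, Copp.
    apply injective_projections; simpl; field; lra. }
  rewrite (alg _ _ _ _ _ _ _ HP).
  rewrite !Cmod_mult, !Cmod_Cexp, Cmod_R.
  assert (E1 : fst (z1, z2) + fst (Cmult wm wm) = c1 * c1 - c2 * c2).
  { unfold wm, wl, Cmult, c1, c2; simpl. field. lra. }
  set (A := c1 * c1 - c2 * c2) in *.
  set (M := sqrt t * exp (- A + Rabs z1)).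
  assert (Hint : Cmod (Cminus (Eint wp) (Eint wm)) <= 2 * M).
  { rewrite <- normC.
    replace (2 * M) with (scal (1 - -1) M) by (unfold scal; simpl; unfold mult; simpl; ring).
    apply (norm_RInt_le (fun l => (D1 c1 c2 q q l, D2 c1 c2 q q l)) (fun _ => M) (-1) 1).
    - lra.
    - intros l Hl. rewrite normC.
      assert (HD : (D1 c1 c2 q q l, D2 c1 c2 q q l) =
                   Cmult (q, q) (Cexp (Copp (Cmult (wl c1 c2 q q l) (wl c1 c2 q q l))))).
      { unfold D1, D2. unfold Hf. rewrite !C1mul, !C0mul.
        destruct (Cmult (q, q) (Cexp (Copp (Cmult (wl c1 c2 q q l) (wl c1 c2 q q l))))) as [u v].
        unfold Cmult; simpl. apply injective_projections; simpl; ring. }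
      rewrite HD, Cmod_mult, Cmod_Cexp.
      assert (Hqm : Cmod (q, q) = sqrt t).
      { unfold Cmod; simpl. f_equal. nra. }
      rewrite Hqm. unfold M. apply Rmult_le_compat_l. apply sqrt_pos.
      apply exp_le'.
      assert (Hf2 : fst (Copp (Cmult (wl c1 c2 q q l) (wl c1 c2 q q l))) = - A - l * z1).
      { unfold A, wl, Cmult, Copp, c1, c2; simpl. field. lra. }
      rewrite Hf2.
      destruct (Rcase_abs z1); [rewrite Rabs_left by lra | rewrite Rabs_right by lra]; nra.
    - exact (contour c1 c2 q q).
    - apply (@is_RInt_const R_NormedModule). }
  pose proof (rhs t ht) as Hr.
  unfold Lambda in Hr. rewrite HE in Hr.
  change (Re (z1, z2)) with z1.
  assert (Hpi : 0 < sqrt PI) by (apply sqrt_lt_R0; pose proof PI_RGT_0; lra).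
  rewrite Rabs_pos_eq by (left; apply Rdiv_lt_0_compat; lra).
  rewrite <- exp_plus, E1.
  apply Rle_trans with (exp A * (2 / sqrt PI * (2 * M))).
  { apply Rmult_le_compat_l. left; apply exp_pos.
    apply Rmult_le_compat_l. left; apply Rdiv_lt_0_compat; lra. exact Hint. }
  unfold M.
  assert (HA : exp A * exp (- A) = 1).
  { rewrite <- exp_plus. replace (A + - A) with 0 by ring. apply exp_0. }
  rewrite exp_plus.
  replace (exp A * (2 / sqrt PI * (2 * (sqrt t * (exp (- A) * exp (Rabs z1))))))
    with ((exp A * exp (- A)) * (4 * sqrt t / sqrt PI) * exp (Rabs z1)) by (field; lra).
  rewrite HA, Rmult_1_l.
  apply Rmult_le_compat_r. left; apply exp_pos.
  apply Rle_trans with (2 * exp (t/2)); [| lra].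
  pose proof (exp_ineq1_le (t/2)).
  assert (Hs3 : 1.7 < sqrt PI).
  { apply Rsqr_incrst_0. unfold Rsqr. rewrite sqrt_sqrt. pose proof PI2_3_2. lra.
    pose proof PI_RGT_0; lra. lra. lra. }
  assert (Hst : sqrt t * sqrt t = t) by (apply sqrt_sqrt; lra).
  pose proof (sqrt_pos t).
  apply Rle_trans with (2 * (1 + t/2)); [|lra].
  unfold Rdiv. apply Rmult_le_reg_r with (sqrt PI); [lra|].
  rewrite Rmult_assoc, Rinv_l by lra. rewrite Rmult_1_r. assert (H2 : 4 * sqrt t <= 2 * (1 + t * / 2) * 1.7) by (pose proof (Rle_0_sqr (sqrt t - 1.2)); unfold Rsqr in *; nra). apply Rle_trans with (1 := H2). apply Rmult_le_compat_l; nra.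
Qed.
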